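(* Let $d\in\mathbb{N}$. Let $(X_S,Y_S)\sim\mathcal{N}(\mu_S,\Sigma_S)$ and $(X_T,Y_T)\sim\mathcal{N}(\mu_T,\Sigma_T)$ be $(d+1)$-dimensional Gaussian random vectors (source and target data) with $$\mu_\cdot=\begin{pmatrix}\mu_{\cdot,X}\\ \mu_{\cdot,Y}\end{pmatrix},\qquad \Sigma_\cdot=\begin{pmatrix}\Sigma_{\cdot,X}&\Sigma_{\cdot,XY}\\ \Sigma_{\cdot,YX}&\Sigma_{\cdot,Y}\end{pmatrix},$$ where $\mu_{\cdot,X},\Sigma_{\cdot,XY}\in\mathbb{R}^d$, $\mu_{\cdot,Y},\Sigma_{\cdot,Y}\in\mathbb{R}$, $\Sigma_{\cdot,YX}=\Sigma_{\cdot,XY}^\top$, and $\Sigma_{\cdot,X}\in\mathbb{R}^{d\times d}$ is invertible, for $\cdot\in\{S,T\}$. For $f:\mathbb{R}^d\to\mathbb{R}$ let $\mathcal{L}_S(f)=\mathbb{E}|Y_S-f(X_S)|^2$ and $\mathcal{L}_T(f)=\mathbb{E}|Y_T-f(X_T)|^2$, and let $f_\cdot^*(x)=w_\cdot^\top x+b_\cdot$ with $w_\cdot=\Sigma_{\cdot,X}^{-1}\Sigma_{\cdot,XY}$, $b_\cdot=\mu_{\cdot,Y}-\Sigma_{\cdot,YX}\Sigma_{\cdot,X}^{-1}\mu_{\cdot,X}$ (the minimizers of $\mathcal{L}_\cdot$ over all functions $\mathbb{R}^d\to\mathbb{R}$). Define the regret $\mathcal{R}(S,T):=\mathcal{L}_T(f_S^*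 )-\mathcal{L}_T(f_T^* )$ and the Wasserstein-based transfer risk $\mathcal{C}_W(S,T):=\mathcal{W}_2(\mathbb{P}_{ST},\mathbb{P}_T)^2$, where $\mathbb{P}_{ST}=\mathrm{Law}(f_S^*(X_T))$ and $\mathbb{P}_T=\mathrm{Law}(f_T^*(X_T))$. Then $$\mathcal{C}_W(S,T)\leq\mathcal{R}(S,T).$$
   Context: This is transfer learning with identity input and output transport maps, so the only intermediate model is the pretrained source model $f_S^*$ applied to the target input. $\mathcal{W}_2(\mu,\nu)^2=\inf_{\gamma\in\Pi(\mu,\nu)}\int|x-y|^2\gamma(dx,dy)$ over couplings $\gamma$ of probability measures $\mu,\nu$ on $\mathbb{R}$. *)

(* Defs.v *)
From HB Require Import structures.
From mathcomp Require Import all_boot all_order all_algebra.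
From mathcomp Require Import all_classical all_reals all_analysis.
Set Implicit Arguments.
Unset Strict Implicit.
Unset Printing Implicit Defensive.
Import Order.TTheory GRing.Theory Num.Theory.
Import numFieldNormedType.Exports.
Local Open Scope classical_set_scope.
Local Open Scope ring_scope.

Section defs.
Context {R : realType}.

Definition dotv (d : nat) (u v : 'rV[R]_d) : R := \sum_(i < d) u 0 i * v 0 i.

Definition gauss_law (m v : R) : set R -> \bar R :=
  if v <= 0 then (fun A => \d_m A) else normal_prob m (Num.sqrt v).

(* (X, Y) : T -> R^d x R is a (d+1)-dimensional Gaussian random vector with
   mean (muX, muY) and covariance [[SX, SXY^T]; [SXY, SY]] (SXY is stored as a
   row vector, i.e. SXY = Sigma_YX): every linear functional a.X + c Y is a
   (measurable) random variable with law N(a.muX + c muY, (a,c) Sigma (a,c)^T). *)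
Definition is_gaussian_vector d0 (T : measurableType d0) (P : probability T R)
  (d : nat) (X : T -> 'rV[R]_d) (Y : T -> R)
  (muX : 'rV[R]_d) (muY : R) (SX : 'M[R]_d) (SXY : 'rV[R]_d) (SY : R) : Prop :=
  forall (a : 'rV[R]_d) (c : R),
    let Z := fun t => dotv a (X t) + c * Y t in
    let v := (a *m SX *m a^T) 0 0 + 2 * c * dotv a SXY + c ^+ 2 * SY in
    [/\ measurable_fun setT Z, 0 <= v &
        forall A : set R, measurable A ->
          P (Z @^-1` A) = gauss_law (dotv a muX + c * muY) v A].

Definition opt_w (d : nat) (SX : 'M[R]_d) (SXY : 'rV[R]_d) : 'cV[R]_d :=
  invmx SX *m SXY^T.
Definition opt_b (d : nat) (muX : 'rV[R]_d) (muY : R) (SX : 'M[R]_d)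
  (SXY : 'rV[R]_d) : R :=
  muY - (SXY *m invmx SX *m muX^T) 0 0.
Definition opt_pred (d : nat) (muX : 'rV[R]_d) (muY : R) (SX : 'M[R]_d)
  (SXY : 'rV[R]_d) (x : 'rV[R]_d) : R :=
  (x *m opt_w SX SXY) 0 0 + opt_b muX muY SX SXY.

Definition sq_loss d0 (T : measurableType d0) (P : probability T R)
  (d : nat) (X : T -> 'rV[R]_d) (Y : T -> R) (f : 'rV[R]_d -> R) : \bar R :=
  (\int[P]_t ((Y t - f (X t)) ^+ 2)%:E)%E.

Definition coupling (mu nu : set R -> \bar R) (g : probability (R * R)%type R)
  : Prop :=
  (forall A : set R, measurable A -> g (A `*` setT) = mu A) /\
  (forall B : set R, measurable B -> g (setT `*` B) = nu B).

Definition W2sq (mu nu : set R -> \bar R) : \bar R :=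
  ereal_inf [set (\int[g]_z ((z.1 - z.2) ^+ 2)%:E)%E | g in coupling mu nu].

End defs.

(* Main.v *)
Require Import Defs.
From HB Require Import structures.
From mathcomp Require Import all_boot all_order all_algebra.
From mathcomp Require Import all_classical all_reals all_analysis.
From mathcomp Require Import measurable_realfun lebesgue_integral normal_distribution ftc gauss_integral.
From mathcomp Require Import ring lra.
Import Order.TTheory GRing.Theory Num.Theory.
Import numFieldNormedType.Exports.
Local Open Scope classical_set_scope.
Local Open Scope ring_scope.

Section S.
Context {R : realType}.
Local Notation mu := (@lebesgue_measure R).
Local Open Scope ereal_scope.
Import HBNNSimple.

Lemma normal_indic (m s : R) (E : set (measurableTypeR R)) : measurable E ->
  \int[normal_prob m s]_x (\1_E x)%:E = \int[mu]_x ((\1_E x)%:E * (normal_pdf m s x)%:E).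
Proof.
move=> mE; rewrite integral_indic// setIT.
transitivity (\int[mu]_(x in E) (normal_pdf m s x)%:E); first by [].
rewrite integral_mkcond; apply: eq_integral => x _; rewrite /patch indicE; case: ifPn => xE.
  by rewrite mul1e.
by rewrite mul0e.
Qed.

Lemma normal_nnsfun (m s : R) (f : {nnsfun measurableTypeR R >-> R}) :
  \int[normal_prob m s]_x (f x)%:E = \int[mu]_x ((f x)%:E * (normal_pdf m s x)%:E).
Proof.
under [LHS]eq_integral do rewrite fimfunE -fsumEFin//.
rewrite [LHS]ge0_integral_fsum//; last 2 first.
  - move=> r; apply/measurable_EFinP; apply: measurable_funM => //; apply: measurable_indic; rewrite -[X in measurable X]setTI; exact: (@measurable_funP1 _ _ _ f setT r measurableT).
  - by move=> n x _; have := nnfun_muleindic_ge0 f n x; rewrite -EFinM.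
under [RHS]eq_integral.
  move=> x xD; rewrite fimfunE -fsumEFin// ge0_mule_fsuml; last first.
    by move=> r; have := nnfun_muleindic_ge0 f r x; rewrite -EFinM.
  over.
rewrite [RHS]ge0_integral_fsum//; last 2 first.
  - move=> r; apply: emeasurable_funM; apply/measurable_EFinP; last exact: measurable_normal_pdf.
    apply: measurable_funM => //; apply: measurable_indic; rewrite -[X in measurable X]setTI; exact: (@measurable_funP1 _ _ _ f setT r measurableT).
  - move=> n x _; rewrite mule_ge0// ?lee_fin ?normal_pdf_ge0//.
    by have := nnfun_muleindic_ge0 f n x; rewrite -EFinM.
apply: eq_fsbigr => r _; have [rf|rf] := boolP (r \in range f); last first.
  rewrite notin_setE in rf.
  rewrite preimage10//.
  under eq_integral do rewrite indic0 mulr0.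
  under [RHS]eq_integral do rewrite indic0 mulr0 mul0e.
  by rewrite !integral0.
have r0 : (0 <= r)%R by move: rf; rewrite inE => -[x _ <-]; exact: fun_ge0.
rewrite integralZl_indic_nnsfun//.
under [RHS]eq_integral do rewrite EFinM -muleA.
rewrite ge0_integralZl//.
- rewrite normal_indic//; rewrite -[X in measurable X]setTI; exact: (@measurable_funP1 _ _ _ f setT r measurableT).
- under eq_fun do rewrite -EFinM.
  apply/measurable_EFinP; apply: measurable_funM; last exact: measurable_normal_pdf.
  apply: measurable_indic; rewrite -[X in measurable X]setTI; exact: (@measurable_funP1 _ _ _ f setT r measurableT).
- by move=> x _; rewrite -EFinM lee_fin mulr_ge0// normal_pdf_ge0.
Qed.

Lemma integral_normal (m s : R) (f : measurableTypeR R -> \bar R) :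
  measurable_fun setT f -> (forall x, 0 <= f x) ->
  \int[normal_prob m s]_x f x = \int[mu]_x (f x * (normal_pdf m s x)%:E).
Proof.
move=> mf f0.
pose f_ := nnsfun_approx measurableT mf.
transitivity (limn (fun n => \int[normal_prob m s]_x (f_ n x)%:E)).
  rewrite -monotone_convergence//=.
  - apply: eq_integral => ? /[!inE] xD; apply/esym/cvg_lim => //=.
    exact: cvg_nnsfun_approx.
  - by move=> n; exact/measurable_EFinP/measurable_funTS.
  - by move=> n ? _; rewrite lee_fin.
  - by move=> ? _ ? ? mn; rewrite lee_fin; exact/lefP/nd_nnsfun_approx.
transitivity (limn (fun n => \int[mu]_x ((f_ n x)%:E * (normal_pdf m s x)%:E))).
  by congr (limn _); apply/funext => n; exact: normal_nnsfun.
rewrite -monotone_convergence//=.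
- apply: eq_integral => x _.
  have H : (fun n => (f_ n x)%:E * (normal_pdf m s x)%:E) @ \oo --> f x * (normal_pdf m s x)%:E.
    by apply: cvgeMr => //; exact: cvg_nnsfun_approx.
  by rewrite (cvg_lim _ H).
- move=> n; under eq_fun do rewrite -EFinM.
  apply/measurable_EFinP; apply: measurable_funM => //; exact: measurable_normal_pdf.
- by move=> n x _; rewrite -EFinM lee_fin mulr_ge0// normal_pdf_ge0.
- move=> x _ a b ab; rewrite -!EFinM lee_fin ler_wpM2r ?normal_pdf_ge0//.
  exact/lefP/nd_nnsfun_approx.
Qed.

Lemma normal_subst (m s k : R) : (0 < s)%R ->
  \int[mu]_x (((x + k) ^+ 2 * normal_pdf m s x)%:E) =
  \int[mu]_y (((m + k + s * y) ^+ 2 * normal_pdf 0 1 y)%:E).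
Proof.
move=> s0.
pose F (y : R^o) : R^o := ((y + m / s) * s)%R.
pose G (x : R) : R := ((x + k) ^+ 2 * normal_pdf m s x)%R.
have F'E : F^`()%classic = cst s.
  apply/funext => x; rewrite /F derive1E deriveM// deriveD// derive_cst scaler0.
  by rewrite add0r derive_id derive_cst addr0 scaler1.
have := @increasing_ge0_integration_by_substitutionT R F G.
rewrite F'E => ->.
- apply: eq_integral => y _; congr EFin; rewrite /G /F /= !fctE /=.
  have e1 : ((y + m / s) * s = m + s * y)%R by field; rewrite gt_eqF.
  rewrite e1 /normal_pdf gt_eqF// oner_eq0 /=.
  have ep : (normal_peak s * s = normal_peak 1)%R.
    rewrite /normal_peak expr1n mul1r -mulrnAr sqrtrM ?sqr_ge0// sqrtr_sqr gtr0_norm//.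
    by rewrite invfM mulrAC mulVf ?gt_eqF// mul1r.
  have ef : normal_fun m s (m + s * y) = normal_fun 0 1 y.
    rewrite /normal_fun; congr expR; rewrite addrAC subrr add0r subr0 expr1n exprMn.
    by field; rewrite gt_eqF.
  rewrite ef -ep; ring.
- move=> x y xy; rewrite /F ltr_pM2r// ltrD2r//.
- by move=> x; exact: cvg_cst.
- exact: is_cvg_cst.
- exact: is_cvg_cst.
- by move=> x; rewrite /F; apply: derivableM => //; apply: derivableD.
- apply/gt0_cvgMlNy => //; exact: cvg_addrr_Ny.
- apply/gt0_cvgMly => //; exact: cvg_addrr.
- move=> x; rewrite /G; apply: cvgM; last by apply: continuous_normal_pdf; rewrite gt_eqF.
  rewrite expr2; apply: cvgM; apply: cvgD; (exact: cvg_id || exact: cvg_cst).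
- by move=> x; rewrite /G mulr_ge0 ?sqr_ge0 ?normal_pdf_ge0.
Qed.

Lemma exp_bound (y : R) :
  (y ^+ 2 * expR (- (y ^+ 2) / 2) <= 4 * expR (- (y ^+ 2) / 4))%R.
Proof.
set t := (y ^+ 2 / 4)%R.
have ht : (y ^+ 2 = 4 * t)%R by rewrite /t; field.
have e2 : (- (y ^+ 2) / 2 = - t + - t)%R by rewrite ht; field.
have e4 : (- (y ^+ 2) / 4 = - t)%R by rewrite ht; field.
rewrite e2 e4 expRD mulrA ler_wpM2r ?expR_ge0//.
rewrite ht expRN -mulrA ler_piMr// ler_pdivrMr ?expR_gt0// mul1r.
by rewrite (le_trans _ (expR_ge1Dx t))// lerDr.
Qed.

Lemma normal_fun01 (y : R) : normal_fun 0 1 y = expR (- (y ^+ 2) / 2).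
Proof. by rewrite /normal_fun subr0 expr1n. Qed.

Lemma normal_fun02 (y : R) : normal_fun 0 (Num.sqrt 2) y = expR (- (y ^+ 2) / 4).
Proof.
rewrite /normal_fun subr0 sqr_sqrtr ?ler0n//; congr expR.
by rewrite -mulr_natr -natrM.
Qed.

Lemma normal_pdf_nz (m s y : R) : (s != 0)%R ->
  normal_pdf m s y = (normal_peak s * normal_fun m s y)%R.
Proof. by move=> s0; rewrite /normal_pdf (negbTE s0). Qed.

Definition Kint := \int[mu]_y ((y ^+ 2 * normal_pdf 0 1 y)%:E).

Lemma Kint_ge0 : 0 <= Kint.
Proof. by apply: integral_ge0 => y _; rewrite lee_fin mulr_ge0 ?sqr_ge0 ?normal_pdf_ge0. Qed.

Lemma Kint_fin : Kint \is a fin_num.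
Proof.
rewrite ge0_fin_numE ?Kint_ge0//.
have s2 : (Num.sqrt 2 != 0 :> R)%R by rewrite gt_eqF// sqrtr_gt0 ltr0n.
pose C : R := (4 * normal_peak 1 / normal_peak (Num.sqrt 2))%R.
apply: (@le_lt_trans _ _ (\int[mu]_y ((C * normal_pdf 0 (Num.sqrt 2) y)%:E))).
  apply: ge0_le_integral => //.
  - by move=> y _; rewrite lee_fin mulr_ge0 ?sqr_ge0 ?normal_pdf_ge0.
  - apply/measurable_EFinP; apply: measurable_funM; last exact: measurable_normal_pdf.
    by apply: measurable_funX.
  - apply/measurable_EFinP; apply: measurable_funM => //; exact: measurable_normal_pdf.
  - move=> y _; rewrite lee_fin normal_pdf_nz ?oner_eq0// normal_pdf_nz// normal_fun01 normal_fun02.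
    have p2 : (0 < normal_peak (Num.sqrt 2 : R))%R by exact: normal_peak_gt0.
    rewrite /C -mulrA mulrCA mulrA [X in (_ <= X)%R](_ : _ = normal_peak 1 * (4 * expR (- (y ^+ 2) / 4)))%R; last first.
      by field; rewrite gt_eqF.
    by rewrite -mulrA ler_wpM2l ?normal_peak_ge0//; exact: exp_bound.
under eq_integral do rewrite EFinM.
rewrite ge0_integralZl_EFin//.
- by rewrite integral_normal_pdf mule1 ltry.
- by move=> y _; rewrite lee_fin normal_pdf_ge0.
- apply/measurable_EFinP; exact: measurable_normal_pdf.
- by rewrite /C mulr_ge0 ?invr_ge0 ?normal_peak_ge0// mulr_ge0 ?normal_peak_ge0.
Qed.

Definition Gc (c s : R) := \int[mu]_y (((c + s * y) ^+ 2 * normal_pdf 0 1 y)%:E).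

Lemma mGc (c s : R) : measurable_fun setT (fun y : measurableTypeR R => (((c + s * y) ^+ 2 * normal_pdf 0 1 y)%:E)).
Proof.
apply/measurable_EFinP; apply: measurable_funM; last exact: measurable_normal_pdf.
apply: measurable_funX; apply: measurable_funD => //; exact: measurable_funM.
Qed.

Lemma Gsum (c s : R) : Gc c s + Gc (- c) s = ((2 * c ^+ 2 + 2 * s ^+ 2 * fine Kint)%:E).
Proof.
rewrite /Gc -ge0_integralD//; last 4 first.
- by move=> y _; rewrite lee_fin mulr_ge0 ?sqr_ge0 ?normal_pdf_ge0.
- exact: mGc.
- by move=> y _; rewrite lee_fin mulr_ge0 ?sqr_ge0 ?normal_pdf_ge0.
- exact: mGc.
transitivity (\int[mu]_y (((2 * c ^+ 2) * normal_pdf 0 1 y)%:E + ((2 * s ^+ 2) * (y ^+ 2 * normal_pdf 0 1 y))%:E)).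
  by apply: eq_integral => y _; rewrite -!EFinD; congr EFin; ring.
rewrite ge0_integralD//; last 4 first.
- by move=> y _; rewrite lee_fin mulr_ge0 ?sqr_ge0 ?normal_pdf_ge0// mulr_ge0 ?sqr_ge0.
- apply/measurable_EFinP; apply: measurable_funM => //; exact: measurable_normal_pdf.
- by move=> y _; rewrite lee_fin; apply: mulr_ge0; rewrite mulr_ge0 ?sqr_ge0 ?normal_pdf_ge0 ?ler0n.
- apply/measurable_EFinP; apply: measurable_funM => //; apply: measurable_funM; last exact: measurable_normal_pdf.
  exact: measurable_funX.
under eq_integral do rewrite EFinM.
rewrite ge0_integralZl_EFin//; last 3 first.
- by move=> y _; rewrite lee_fin normal_pdf_ge0.
- apply/measurable_EFinP; exact: measurable_normal_pdf.
- by rewrite mulr_ge0 ?sqr_ge0.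
under [X in _ + X]eq_integral do rewrite EFinM.
rewrite ge0_integralZl_EFin//; last 3 first.
- by move=> y _; rewrite lee_fin mulr_ge0 ?sqr_ge0 ?normal_pdf_ge0.
- apply/measurable_EFinP; apply: measurable_funM; last exact: measurable_normal_pdf.
  exact: measurable_funX.
- by rewrite mulr_ge0 ?sqr_ge0.
rewrite integral_normal_pdf mule1 -/Kint -(fineK Kint_fin) -EFinM -EFinD.
by rewrite mulrA.
Qed.
End S.

Section S2.
Context {R : realType}.
Local Notation mu := (@lebesgue_measure R).
Local Open Scope ereal_scope.

Lemma law_int d0 (T : measurableType d0) (P : probability T R) (Z : T -> R) (m v k : R) :
  measurable_fun setT Z -> (0 < v)%R ->
  (forall A : set R, measurable A -> P (Z @^-1` A) = gauss_law m v A) ->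
  \int[P]_t (((Z t + k) ^+ 2)%:E) = Gc (m + k) (Num.sqrt v).
Proof.
move=> mZ v0 law.
pose Z' : T -> measurableTypeR R := Z.
have mZ' : measurable_fun setT Z' := mZ.
have mf : measurable_fun setT (fun x : measurableTypeR R => ((x + k) ^+ 2)%:E).
  by apply/measurable_EFinP; apply: measurable_funX; apply: measurable_funD.
transitivity (\int[pushforward P Z']_x (((x + k) ^+ 2)%:E)).
  by rewrite ge0_integral_pushforward//; move=> y _; rewrite lee_fin sqr_ge0.
rewrite (eq_measure_integral (normal_prob m (Num.sqrt v))); last first.
  move=> A mA _; rewrite /pushforward; have := law A mA; rewrite /gauss_law leNgt v0 /= => <-.
  by [].
rewrite integral_normal//; last by move=> y; rewrite lee_fin sqr_ge0.
under eq_integral do rewrite -EFinM.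
by rewrite normal_subst// sqrtr_gt0.
Qed.

Lemma law_int0 d0 (T : measurableType d0) (P : probability T R) (Z : T -> R) (m v k : R) :
  measurable_fun setT Z -> (v <= 0)%R ->
  (forall A : set R, measurable A -> P (Z @^-1` A) = gauss_law m v A) ->
  \int[P]_t (((Z t + k) ^+ 2)%:E) = ((m + k) ^+ 2)%:E.
Proof.
move=> mZ v0 law.
have mf : measurable_fun setT (fun x : R => ((x + k) ^+ 2)%:E).
  by apply/measurable_EFinP; apply: measurable_funX; apply: measurable_funD.
transitivity (\int[pushforward P Z]_x (((x + k) ^+ 2)%:E)).
  by rewrite ge0_integral_pushforward//; move=> y _; rewrite lee_fin sqr_ge0.
rewrite (eq_measure_integral (\d_m)); last first.
  move=> A mA _; rewrite /pushforward; have := law A mA; rewrite /gauss_law v0 /= => <-.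
  by [].
by rewrite integral_dirac// diracE mem_set// mul1e.
Qed.

Lemma key0 d0 (T : measurableType d0) (P : probability T R) (Z : T -> R) (m v k : R) :
  measurable_fun setT Z -> (0 <= v)%R ->
  (forall A : set R, measurable A -> P (Z @^-1` A) = gauss_law m v A) ->
  (forall A : set R, measurable A -> P ((fun t => - Z t)%R @^-1` A) = gauss_law (- m) v A) ->
  \int[P]_t (((Z t + k) ^+ 2)%:E) = ((m + k) ^+ 2 + v * fine Kint)%:E.
Proof.
move=> mZ v0 law lawN.
have [v00|vgt0] := eqVneq v 0%R.
  by rewrite v00 mul0r addr0; apply: (@law_int0 _ _ P Z m v k mZ _ law); rewrite v00.
have vp : (0 < v)%R by rewrite lt_def vgt0 v0.
have E1 := @law_int _ _ P Z m v k mZ vp law.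
have mZN : measurable_fun setT (fun t => - Z t)%R by apply: measurableT_comp.
have E2 := @law_int _ _ P _ (- m) v (- k) mZN vp lawN.
have E12 : \int[P]_t (((Z t + k) ^+ 2)%:E) = \int[P]_t (((- Z t + - k) ^+ 2)%:E).
  by apply: eq_integral => t _; congr EFin; ring.
have := Gsum (m + k) (Num.sqrt v).
rewrite -E1 opprD -E2 -E12 sqr_sqrtr//.
case: (\int[P]_t (((Z t + k) ^+ 2)%:E)) => [r| |] //= [H].
congr EFin; apply: (@mulfI _ 2%R); first by rewrite pnatr_eq0.
have -> : (2 * ((m + k) ^+ 2 + v * fine Kint) = r + r)%R by rewrite H; ring.
ring.
Qed.
End S2.

Section S3.
Context {R : realType}.

Lemma dotvN {d} (a x : 'rV[R]_d) : dotv (- a) x = - dotv a x.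
Proof. by rewrite /dotv -sumrN; apply: eq_bigr => i _; rewrite mxE mulNr. Qed.

Definition gvar {d} (SX : 'M[R]_d) (SXY : 'rV[R]_d) (SY : R) a c :=
  (a *m SX *m a^T) 0 0 + 2 * c * dotv a SXY + c ^+ 2 * SY.

Lemma key_gv d0 (T : measurableType d0) (P : probability T R) d (X : T -> 'rV[R]_d) (Y : T -> R)
  muX muY SX SXY SY : is_gaussian_vector P X Y muX muY SX SXY SY ->
  forall (a : 'rV[R]_d) (c k : R),
  (\int[P]_t (((dotv a (X t) + c * Y t + k) ^+ 2)%:E) =
   ((dotv a muX + c * muY + k) ^+ 2 + gvar SX SXY SY a c * fine Kint)%:E)%E.
Proof.
move=> H a c k.
have [mZ v0 law] := H a c.
have [_ _ lawN] := H (- a) (- c).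
apply: (@key0 R _ _ P (fun t => dotv a (X t) + c * Y t) _ (gvar SX SXY SY a c) k mZ v0 law).
move=> A mA; have := lawN A mA.
have -> : (fun t => dotv (- a) (X t) + - c * Y t) = (fun t => - (dotv a (X t) + c * Y t)).
  by apply/funext => t; rewrite dotvN; ring.
move=> ->; congr gauss_law.
  by rewrite dotvN; ring.
rewrite /gvar dotvN mulNmx linearN /= mulmxN mulNmx opprK; ring.
Qed.
End S3.

Section S4.
Context {R : realType}.

Lemma dotvE {d} (u w : 'rV[R]_d) : dotv u w = (u *m w^T) 0 0.
Proof. by rewrite /dotv mxE; apply: eq_bigr => i _; rewrite mxE. Qed.

Lemma dotvC {d} (u w : 'rV[R]_d) : dotv u w = dotv w u.
Proof. by rewrite /dotv; apply: eq_bigr => i _; rewrite mulrC. Qed.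

Lemma dotvBl {d} (u v w : 'rV[R]_d) : dotv (u - v) w = dotv u w - dotv v w.
Proof. by rewrite /dotv -sumrB; apply: eq_bigr => i _; rewrite !mxE mulrBl. Qed.

Definition Bf {d} (S : 'M[R]_d) (u w : 'rV[R]_d) := (u *m S *m w^T) 0 0.

Lemma BfBB {d} (S : 'M[R]_d) u w :
  Bf S (u - w) (u - w) = Bf S u u - Bf S u w - Bf S w u + Bf S w w.
Proof.
rewrite /Bf mulmxBl linearB /= mulmxBr !mulmxBl !mxE; ring.
Qed.

Lemma BfNN {d} (S : 'M[R]_d) u : Bf S (- u) (- u) = Bf S u u.
Proof. by rewrite /Bf mulNmx linearN /= mulmxN mulNmx opprK. Qed.

Lemma BfC {d} (S : 'M[R]_d) u w : S^T = S -> Bf S u w = Bf S w u.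
Proof.
move=> sS; rewrite /Bf -[in LHS](trmxK (u *m S *m w^T)) [in LHS]mxE.
by rewrite !trmx_mul trmxK sS mulmxA.
Qed.

Lemma Bf_opt {d} (S : 'M[R]_d) (SXY u : 'rV[R]_d) : S \in unitmx ->
  Bf S u (opt_w S SXY)^T = dotv u SXY.
Proof.
move=> uS; rewrite /Bf /opt_w trmxK !mulmxA -(mulmxA u) mulmxV// mulmx1.
by rewrite dotvE.
Qed.

Lemma opt_b_E {d} (S : 'M[R]_d) (SXY muX : 'rV[R]_d) muY : S^T = S -> S \in unitmx ->
  opt_b muX muY S SXY = muY - dotv (opt_w S SXY)^T muX.
Proof.
move=> sS uS; rewrite /opt_b dotvE /opt_w trmx_mul trmxK trmx_inv sS.
by [].
Qed.

Lemma opt_pred_E {d} (S : 'M[R]_d) (SXY muX x : 'rV[R]_d) muY :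
  opt_pred muX muY S SXY x = dotv (opt_w S SXY)^T x + opt_b muX muY S SXY.
Proof. by rewrite /opt_pred dotvC dotvE trmxK. Qed.

End S4.

Theorem proposition4 (R : realType) (d : nat)
  (dS : measure_display) (TS : measurableType dS) (PS : probability TS R)
  (dT : measure_display) (TT : measurableType dT) (PT : probability TT R)
  (XS : TS -> 'rV[R]_d) (YS : TS -> R) (XT : TT -> 'rV[R]_d) (YT : TT -> R)
  (muSX muTX : 'rV[R]_d) (muSY muTY : R)
  (SSX STX : 'M[R]_d) (SSXY STXY : 'rV[R]_d) (SSY STY : R) :
  SSX^T = SSX -> STX^T = STX ->
  SSX \in unitmx -> STX \in unitmx ->
  is_gaussian_vector PS XS YS muSX muSY SSX SSXY SSY ->
  is_gaussian_vector PT XT YT muTX muTY STX STXY STY ->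
  let fS := opt_pred muSX muSY SSX SSXY in
  let fT := opt_pred muTX muTY STX STXY in
  (W2sq (pushforward PT (fun t => fS (XT t))) (pushforward PT (fun t => fT (XT t)))
   <= sq_loss PT XT YT fS - sq_loss PT XT YT fT)%E.
Proof.
move=> sS sT uS uT HS HT; cbv zeta.
set fS := opt_pred muSX muSY SSX SSXY; set fT := opt_pred muTX muTY STX STXY.
set aS := (opt_w SSX SSXY)^T; set bS := opt_b muSX muSY SSX SSXY.
set aT := (opt_w STX STXY)^T; set bT := opt_b muTX muTY STX STXY.
have fSE x : fS x = dotv aS x + bS by rewrite /fS opt_pred_E.
have fTE x : fT x = dotv aT x + bT by rewrite /fT opt_pred_E.
pose K : R := fine Kint.
have LS : sq_loss PT XT YT fS =
    ((dotv (- aS) muTX + 1 * muTY + - bS) ^+ 2 + gvar STX STXY STY (- aS) 1 * K)%:E.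
  rewrite -(@key_gv _ _ _ _ _ _ _ _ _ _ _ _ HT); apply: eq_integral => t _; congr EFin.
  by rewrite fSE dotvN; ring.
have LT : sq_loss PT XT YT fT =
    ((dotv (- aT) muTX + 1 * muTY + - bT) ^+ 2 + gvar STX STXY STY (- aT) 1 * K)%:E.
  rewrite -(@key_gv _ _ _ _ _ _ _ _ _ _ _ _ HT); apply: eq_integral => t _; congr EFin.
  by rewrite fTE dotvN; ring.
have LD : (\int[PT]_t (((fS (XT t) - fT (XT t)) ^+ 2)%:E))%E =
    ((dotv (aS - aT) muTX + 0 * muTY + (bS - bT)) ^+ 2 + gvar STX STXY STY (aS - aT) 0 * K)%:E.
  rewrite -(@key_gv _ _ _ _ _ _ _ _ _ _ _ _ HT); apply: eq_integral => t _; congr EFin.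
  by rewrite fSE fTE dotvBl; ring.
have alg : ((dotv (aS - aT) muTX + 0 * muTY + (bS - bT)) ^+ 2 + gvar STX STXY STY (aS - aT) 0 * K)
  = ((dotv (- aS) muTX + 1 * muTY + - bS) ^+ 2 + gvar STX STXY STY (- aS) 1 * K)
    - ((dotv (- aT) muTX + 1 * muTY + - bT) ^+ 2 + gvar STX STXY STY (- aT) 1 * K).
  rewrite /gvar -!/(Bf STX _ _) BfBB BfNN BfNN (BfC _ aT aS sT).
  rewrite /aT !Bf_opt// -/aT /bT opt_b_E// -/aT !dotvN dotvBl.
  ring.
have mS : measurable_fun setT (fun t => fS (XT t)).
  have [m0 _ _] := HT aS 0.
  rewrite (_ : (fun t => fS (XT t)) = fun t => (dotv aS (XT t) + 0 * YT t) + bS).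
    by apply: measurable_funD.
  by apply/funext => t; rewrite fSE; ring.
have mT : measurable_fun setT (fun t => fT (XT t)).
  have [m0 _ _] := HT aT 0.
  rewrite (_ : (fun t => fT (XT t)) = fun t => (dotv aT (XT t) + 0 * YT t) + bT).
    by apply: measurable_funD.
  by apply/funext => t; rewrite fTE; ring.
pose phi (t : TT) : (R * R)%type := (fS (XT t), fT (XT t)).
have mphi : measurable_fun setT phi by exact: measurable_fun_pair.
pose phiM : {mfun TT >-> (R * R)%type} := HB.pack phi (isMeasurableFun.Build _ _ _ _ phi mphi).
pose g := distribution PT phiM.
have cpl : coupling (pushforward PT (fun t => fS (XT t))) (pushforward PT (fun t => fT (XT t))) g.
  split => A mA; rewrite /g /distribution /pushforward /=; congr (PT _);
    by apply/seteqP; split => t /=; [case | move=> ?; split].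
have Ig : (\int[g]_z (((z.1 - z.2) ^+ 2)%:E) = \int[PT]_t (((fS (XT t) - fT (XT t)) ^+ 2)%:E))%E.
  rewrite ge0_integral_distribution//; last by move=> y; rewrite lee_fin sqr_ge0.
  apply/measurable_EFinP; apply: measurable_funX; apply: measurable_funB.
    exact: measurable_fst.
  exact: measurable_snd.
apply: (le_trans (ereal_inf_lbound _)); first by exists g.
by rewrite Ig LD LS LT -EFinB alg.
Qed.
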